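(* If $\Gamma ; \Delta \vdash \mathcal{C}$ in $\lambda_{\text{act}}$, then $[\![\Gamma]\!] ; [\![\Delta]\!] \vdash [\![\mathcal{C}]\!]$ in $\lambda_{\text{ch}}$.
   Context: $\lambda_{\text{act}}$ is a concurrent fine-grain call-by-value $\lambda$-calculus with actors: types $A ::= \mathbf{1} \mid A \to^{C} B \mid \mathsf{ActorRef}(A)$ (the annotation $C$ on an arrow is the mailbox type of the actor evaluating the function), computations include $\mathsf{spawn}\, M$, $\mathsf{send}\, V\, W$, $\mathsf{receive}$, $\mathsf{self}$; term judgements are $\Gamma \mid B \vdash M : A$ ($B$ the mailbox type). Configurations are $\mathcal{C} \parallel \mathcal{D}$, $(\nu a)\mathcal{C}$ and actors $\langle a, M, \vec{V}\rangle$ (name $a$, running $M$, mailbox $\vec V$), typed by $\Gamma;\Delta \vdash \mathcal{C}$ with $\Delta$ a linear environment mapping names to mailbox types (rules: Par splits $\Delta$; $(\nu a)\mathcal{C}$ typed if $\Gamma, a{:}\mathsf{ActorRef}(A); \Delta, a{:}A \vdash \mathcal{C}$; $\Gamma, a{:}\mathsf{ActorRef}(A); a{:}A \vdash \langle a,M,\vec V\rangle$ if $\Gamma, a{:}\mathsf{ActorRef}(A) \mid A \vdash M:\mathbf{1}$ and each $V_i : A$). $\lambda_{\text{ch}}$ is the analogous calculus with asynchronous channels: types $\mathbf{1} \mid A\to B \mid \mathsf{Chan}(A)$, primitives $\mathsf{fork}\,M$, $\mathsf{give}\,V\,W$, $\mathsf{take}\,V$, $\mathsf{newCh}$; configurations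 are parallel composition, $(\nu a)\mathcal{C}$, terms $M$ (typed with empty $\Delta$, $M:\mathbf{1}$) and buffers $a(\vec V)$ (typed $\Gamma; a{:}A \vdash a(\vec V)$ when each $V_i : A$), with $(\nu a)\mathcal{C}$ typed if $\Gamma, a{:}\mathsf{Chan}(A); \Delta, a{:}A \vdash \mathcal{C}$. The translation $[\![-]\!]$ from $\lambda_{\text{act}}$ to $\lambda_{\text{ch}}$: on types $[\![\mathsf{ActorRef}(A)]\!] = \mathsf{Chan}([\![A]\!])$, $[\![A \to^{C} B]\!] = [\![A]\!] \to \mathsf{Chan}([\![C]\!]) \to [\![B]\!]$, $[\![\mathbf{1}]\!]=\mathbf{1}$; on values $[\![\lambda x.M]\!] = \lambda x.\lambda ch.([\![M]\!]\, ch)$, identity otherwise; on terms, parameterised by a mailbox channel $ch$: $\mathsf{receive} \mapsto \mathsf{take}\, ch$, $\mathsf{self} \mapsto \mathsf{return}\, ch$, $\mathsf{send}\,V\,W \mapsto \mathsf{give}\,[\![V]\!]\,[\![W]\!]$, $\mathsf{spawn}\,M \mapsto$ create a new channel $chMb$, fork $[\![M]\!]\,chMb$, return $chMb$, application $V\,W \mapsto$ let $f \Leftarrow [\![V]\!]\,[\![W]\!]$ in $f\,ch$, homomorphic on let/return. On configurations the translation is homomorphic on $\parallel$ and $\nu$, and $[\![\langle a, M, \vec V\rangle]\!] = a([\![\vec V]\!]) \parallel ([\![M]\!]\, a)$ (mailbox becomes a buffer, $a$ used as the mailbox channel). Environments $\Gamma$ and $\Delta$ are translated pointwise on their types. *)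

(* Defs.v *)
(* Variables (bound by lambda /
   let) and names (bound by nu) are two separate sorts, both represented by
   de Bruijn indices. *)
From Stdlib Require Import List.
Import ListNotations.

(* AFun A C B  is  A ->^C B *)
Inductive aty : Type :=
| AUnit : aty
| AFun : aty -> aty -> aty -> aty
| ARef : aty -> aty.

Inductive aval : Type :=
| AVar : nat -> aval
| AName : nat -> aval
| AUnitV : aval
| ALam : atm -> aval
with atm : Type :=
| ARet : aval -> atm
| ALet : atm -> atm -> atm
| AApp : aval -> aval -> atm
| ASpawn : atm -> atm
| ASend : aval -> aval -> atm
| ARecv : atm
| ASelf : atm.

Inductive aconf : Type :=
| APar : aconf -> aconf -> aconf
| ANu : aconf -> aconf
| AActor : nat -> atm -> list aval -> aconf.

(* Typing environments: Gamma is split into a variable part [G] (list,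
   indexed by de Bruijn variables) and a name part [N] (list, indexed by
   de Bruijn names).  Delta is a finite linear map from names to types. *)
Definition lin (T : Type) := nat -> option T.

Definition lin_empty {T} : lin T := fun _ => None.
Definition lin_single {T} (a : nat) (A : T) : lin T :=
  fun n => if Nat.eqb n a then Some A else None.
Definition lin_ext {T} (D : lin T) (A : T) : lin T :=
  fun n => match n with 0 => Some A | S k => D k end.
Definition lin_split {T} (D D1 D2 : lin T) : Prop :=
  forall n, (D1 n = None /\ D n = D2 n) \/ (D2 n = None /\ D n = D1 n).

(* Gamma |- V : A   and   Gamma | B |- M : A *)
Inductive aval_ty (G N : list aty) : aval -> aty -> Prop :=
| AT_Var : forall x A, nth_error G x = Some A -> aval_ty G N (AVar x) A
| AT_Name : forall a A, nth_error N a = Some A -> aval_ty G N (AName a) A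
| AT_Unit : aval_ty G N AUnitV AUnit
| AT_Lam : forall M A B C, atm_ty (A :: G) N C M B ->
    aval_ty G N (ALam M) (AFun A C B)
with atm_ty (G N : list aty) : aty -> atm -> aty -> Prop :=
| AT_Ret : forall C V A, aval_ty G N V A -> atm_ty G N C (ARet V) A
| AT_Let : forall C M M' A B, atm_ty G N C M A -> atm_ty (A :: G) N C M' B ->
    atm_ty G N C (ALet M M') B
| AT_App : forall C V W A B, aval_ty G N V (AFun A C B) -> aval_ty G N W A ->
    atm_ty G N C (AApp V W) B
| AT_Spawn : forall B M A, atm_ty G N A M AUnit ->
    atm_ty G N B (ASpawn M) (ARef A)
| AT_Send : forall B V W A, aval_ty G N V A -> aval_ty G N W (ARef A) ->
    atm_ty G N B (ASend V W) AUnit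
| AT_Recv : forall A, atm_ty G N A ARecv A
| AT_Self : forall A, atm_ty G N A ASelf (ARef A).

Inductive aconf_ty : list aty -> list aty -> lin aty -> aconf -> Prop :=
| AC_Par : forall G N D D1 D2 c d, lin_split D D1 D2 ->
    aconf_ty G N D1 c -> aconf_ty G N D2 d -> aconf_ty G N D (APar c d)
| AC_Nu : forall G N D A c, aconf_ty G (ARef A :: N) (lin_ext D A) c ->
    aconf_ty G N D (ANu c)
| AC_Actor : forall G N a A M vs, nth_error N a = Some (ARef A) ->
    atm_ty G N A M AUnit -> (forall V, In V vs -> aval_ty G N V A) ->
    aconf_ty G N (lin_single a A) (AActor a M vs).

Inductive cty : Type :=
| CUnit : cty
| CFun : cty -> cty -> cty
| CChan : cty -> cty.

Inductive cval : Type :=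
| CVar : nat -> cval
| CName : nat -> cval
| CUnitV : cval
| CLam : ctm -> cval
with ctm : Type :=
| CRet : cval -> ctm
| CLet : ctm -> ctm -> ctm
| CApp : cval -> cval -> ctm
| CFork : ctm -> ctm
| CGive : cval -> cval -> ctm
| CTake : cval -> ctm
| CNewCh : ctm.

Inductive cconf : Type :=
| CPar : cconf -> cconf -> cconf
| CNu : cconf -> cconf
| CTerm : ctm -> cconf
| CBuf : nat -> list cval -> cconf.

Inductive cval_ty (G N : list cty) : cval -> cty -> Prop :=
| CT_Var : forall x A, nth_error G x = Some A -> cval_ty G N (CVar x) A
| CT_Name : forall a A, nth_error N a = Some A -> cval_ty G N (CName a) A
| CT_Unit : cval_ty G N CUnitV CUnit
| CT_Lam : forall M A B, ctm_ty (A :: G) N M B -> cval_ty G N (CLam M) (CFun A B)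
with ctm_ty (G N : list cty) : ctm -> cty -> Prop :=
| CT_Ret : forall V A, cval_ty G N V A -> ctm_ty G N (CRet V) A
| CT_Let : forall M M' A B, ctm_ty G N M A -> ctm_ty (A :: G) N M' B ->
    ctm_ty G N (CLet M M') B
| CT_App : forall V W A B, cval_ty G N V (CFun A B) -> cval_ty G N W A ->
    ctm_ty G N (CApp V W) B
| CT_Fork : forall M, ctm_ty G N M CUnit -> ctm_ty G N (CFork M) CUnit
| CT_Give : forall V W A, cval_ty G N V A -> cval_ty G N W (CChan A) ->
    ctm_ty G N (CGive V W) CUnit
| CT_Take : forall V A, cval_ty G N V (CChan A) -> ctm_ty G N (CTake V) A
| CT_NewCh : forall A, ctm_ty G N CNewCh (CChan A).

Inductive cconf_ty : list cty -> list cty -> lin cty -> cconf -> Prop :=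
| CC_Par : forall G N D D1 D2 c d, lin_split D D1 D2 ->
    cconf_ty G N D1 c -> cconf_ty G N D2 d -> cconf_ty G N D (CPar c d)
| CC_Nu : forall G N D A c, cconf_ty G (CChan A :: N) (lin_ext D A) c ->
    cconf_ty G N D (CNu c)
| CC_Term : forall G N M, ctm_ty G N M CUnit -> cconf_ty G N lin_empty (CTerm M)
| CC_Buf : forall G N a A vs, nth_error N a = Some (CChan A) ->
    (forall V, In V vs -> cval_ty G N V A) ->
    cconf_ty G N (lin_single a A) (CBuf a vs).

Fixpoint tr_ty (A : aty) : cty :=
  match A with
  | AUnit => CUnit
  | AFun A C B => CFun (tr_ty A) (CFun (CChan (tr_ty C)) (tr_ty B))
  | ARef A => CChan (tr_ty A)
  end.

(* The mailbox-channel parameter ch of the term translation: a variable or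
   a name of lambda_ch. *)
Inductive chref : Type := RVar : nat -> chref | RName : nat -> chref.

Definition chref_val (c : chref) : cval :=
  match c with RVar n => CVar n | RName a => CName a end.

Definition chref_shift (c : chref) : chref :=
  match c with RVar n => RVar (S n) | RName a => RName a end.

(* de Bruijn bookkeeping: [rho] maps lambda_act variables of the source term
   to lambda_ch variables of the target (the translation inserts extra
   binders ch, chMb, f). *)
Definition up (rho : nat -> nat) (n : nat) : nat :=
  match n with 0 => 0 | S k => S (rho k) end.

Fixpoint tr_val (rho : nat -> nat) (V : aval) : cval :=
  match V with
  | AVar x => CVar (rho x)
  | AName a => CName a
  | AUnitV => CUnitV
  (* [[lambda x. M]] = lambda x. lambda ch. ([[M]] ch); in fine-grain
     syntax the body of the outer lambda is  return (lambda ch. ...) *)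
  | ALam M => CLam (CRet (CLam (tr_tm (fun n => match n with
                                           | 0 => 1
                                           | S k => S (S (rho k)) end)
                                (RVar 0) M)))
  end
with tr_tm (rho : nat -> nat) (c : chref) (M : atm) : ctm :=
  match M with
  | ARet V => CRet (tr_val rho V)
  | ALet M1 M2 => CLet (tr_tm rho c M1) (tr_tm (up rho) (chref_shift c) M2)
  (* let f <= [[V]] [[W]] in f ch *)
  | AApp V W => CLet (CApp (tr_val rho V) (tr_val rho W))
                     (CApp (CVar 0) (chref_val (chref_shift c)))
  (* let chMb <= newCh in let _ <= fork ([[M]] chMb) in return chMb *)
  | ASpawn M1 => CLet CNewCh
                   (CLet (CFork (tr_tm (fun n => S (rho n)) (RVar 0) M1))
                         (CRet (CVar 1)))
  | ASend V W => CGive (tr_val rho V) (tr_val rho W)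
  | ARecv => CTake (chref_val c)
  | ASelf => CRet (chref_val c)
  end.

Fixpoint tr_conf (c : aconf) : cconf :=
  match c with
  | APar c1 c2 => CPar (tr_conf c1) (tr_conf c2)
  | ANu c1 => CNu (tr_conf c1)
  | AActor a M vs =>
      CPar (CBuf a (map (tr_val (fun n => n)) vs))
           (CTerm (tr_tm (fun n => n) (RName a) M))
  end.

Definition tr_env (G : list aty) : list cty := map tr_ty G.
Definition tr_lin (D : lin aty) : lin cty := fun n => option_map tr_ty (D n).

(* Main.v *)
Require Import Defs.
From Stdlib Require Import List FunctionalExtensionality.
Import ListNotations.

Scheme aval_ty_ind2 := Induction for aval_ty Sort Prop
with atm_ty_ind2 := Induction for atm_ty Sort Prop.

Lemma nth_tr : forall (G : list aty) x A, nth_error G x = Some A ->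
  nth_error (tr_env G) x = Some (tr_ty A).
Proof. intros. unfold tr_env. rewrite nth_error_map, H. reflexivity. Qed.

Definition rho_ok (G : list aty) (G' : list cty) (rho : nat -> nat) :=
  forall x A, nth_error G x = Some A -> nth_error G' (rho x) = Some (tr_ty A).

Combined Scheme ty_mut from aval_ty_ind2, atm_ty_ind2.

Lemma tr_typing_all : forall G N,
  (forall V A, aval_ty G N V A -> forall G' rho, rho_ok G G' rho ->
     cval_ty G' (tr_env N) (tr_val rho V) (tr_ty A)) /\
  (forall B M A, atm_ty G N B M A -> forall G' rho c, rho_ok G G' rho ->
     cval_ty G' (tr_env N) (chref_val c) (CChan (tr_ty B)) ->
     ctm_ty G' (tr_env N) (tr_tm rho c M) (tr_ty A)).
Proof.
  apply ty_mut; intros; simpl.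
    + constructor. apply H; assumption.
    + constructor. apply nth_tr; assumption.
    + constructor.
    + constructor. constructor. constructor. apply H.
      * intros [|x] A0 Hx; simpl in *; [congruence|]. apply H0; assumption.
      * constructor. reflexivity.
    + constructor. apply H; assumption.
    + econstructor. apply H; eassumption.
      apply H0.
      * intros [|x] A0 Hx; simpl in *; [congruence|]. apply H1; assumption.
      * destruct c; simpl in *; inversion H2; subst; constructor; assumption.
    + econstructor. econstructor. apply H; eassumption.
      apply H0; eassumption.
      econstructor. constructor. reflexivity.
      destruct c; simpl in *; inversion H2; subst; constructor; assumption.
    + econstructor. apply CT_NewCh with (A := tr_ty A).
      econstructor. constructor. apply H.
      * intros x A0 Hx. simpl. apply H0; assumption.
      * constructor. reflexivity.
      * constructor. constructor. reflexivity.
    + econstructor. apply H; eassumption. apply H0; eassumption.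
    + constructor. assumption.
    + constructor. assumption.
Qed.

Lemma tr_typing : forall G N,
  (forall V A, aval_ty G N V A -> forall G' rho, rho_ok G G' rho ->
     cval_ty G' (tr_env N) (tr_val rho V) (tr_ty A)) /\
  (forall B M A, atm_ty G N B M A -> forall G' rho c, rho_ok G G' rho ->
     cval_ty G' (tr_env N) (chref_val c) (CChan (tr_ty B)) ->
     ctm_ty G' (tr_env N) (tr_tm rho c M) (tr_ty A)).
Proof. exact tr_typing_all. Qed.

Theorem theorem18 :
  forall (G N : list aty) (D : lin aty) (c : aconf),
    aconf_ty G N D c ->
    cconf_ty (tr_env G) (tr_env N) (tr_lin D) (tr_conf c).
Proof.
  intros G N D c H. induction H; simpl.
  - apply CC_Par with (D1 := tr_lin D1) (D2 := tr_lin D2); auto.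
    intro n. unfold tr_lin. destruct (H n) as [[E1 E2]|[E1 E2]];
      [left|right]; rewrite E1, E2; auto.
  - apply CC_Nu with (A := tr_ty A).
    replace (lin_ext (tr_lin D) (tr_ty A)) with (tr_lin (lin_ext D A)).
    exact IHaconf_ty.
    apply functional_extensionality. intros [|n]; reflexivity.
  - replace (tr_lin (lin_single a A)) with (lin_single a (tr_ty A)).
    2:{ apply functional_extensionality. intro n. unfold tr_lin, lin_single.
        destruct (Nat.eqb n a); reflexivity. }
    apply CC_Par with (D1 := lin_single a (tr_ty A)) (D2 := lin_empty).
    + intro n. right. split; reflexivity.
    + constructor. apply (nth_tr _ _ _ H).
      intros V HV. apply in_map_iff in HV. destruct HV as [V0 [<- HV0]].
      apply (proj1 (tr_typing G N)). apply H1; assumption.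
      intros x A0 Hx. apply nth_tr; assumption.
    + constructor. change CUnit with (tr_ty AUnit). eapply (proj2 (tr_typing G N)). eassumption.
      intros x A0 Hx. apply nth_tr; assumption.
      simpl. constructor. apply (nth_tr _ _ _ H).
Qed.
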